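(* Let $G$ be a locally compact group acting properly on a space $X$, and let $Y$ be any $G$-space. Let $S$ be a closed small subset of $X$ and let $f:S\to Y$ be a continuous map such that whenever $s\in S$ and $g\in G$ satisfy $gs\in S$, one has $f(gs)=gf(s)$. Then $f$ extends uniquely to a continuous equivariant map $F:G(S)\to Y$ (i.e. $F(gx)=gF(x)$ for all $g\in G$, $x\in G(S)$).
   Context: All spaces are completely regular Hausdorff. A $G$-space is a space $X$ with a continuous action $G\times X\to X$, $(g,x)\mapsto gx$, with $ex=x$ and $(gh)x=g(hx)$. For $S\subset X$, $G(S)=\{gs\mid g\in G,s\in S\}$. For $U,V\subset X$ the transporter is $\langle U,V\rangle=\{g\in G\mid gU\cap V\neq\emptyset\}$; $U$ and $V$ are thin relative to each other if $\langle U,V\rangle$ has compact closure in $G$. A subset $U\subset X$ is small if every point of $X$ has a neighborhood thin relative to $U$. For $G$ locally compact, a $G$-space $X$ is proper (the action is proper) if every point of $X$ has a small neighborhood. *)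

(* Defs.v *)
From Stdlib Require Import Reals List.
Open Scope R_scope.

Record Topology (T : Type) := {
  is_open : (T -> Prop) -> Prop;
  open_full : is_open (fun _ => True);
  open_inter : forall U V, is_open U -> is_open V -> is_open (fun x => U x /\ V x);
  open_union : forall F : (T -> Prop) -> Prop,
      (forall U, F U -> is_open U) -> is_open (fun x => exists U, F U /\ U x)
}.
Arguments is_open {T} t U.

Section Topo.
Context {T : Type} (t : Topology T).

Definition is_closed (C : T -> Prop) : Prop := is_open t (fun x => ~ C x).

Definition nbhd (x : T) (N : T -> Prop) : Prop :=
  exists O, is_open t O /\ O x /\ forall y, O y -> N y.

Definition closure (A : T -> Prop) (x : T) : Prop :=
  forall U, is_open t U -> U x -> exists y, U y /\ A y.

Definition compact (K : T -> Prop) : Prop :=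
  forall F : (T -> Prop) -> Prop,
    (forall U, F U -> is_open t U) ->
    (forall x, K x -> exists U, F U /\ U x) ->
    exists l : list (T -> Prop),
      (forall U, In U l -> F U) /\ (forall x, K x -> exists U, In U l /\ U x).

Definition hausdorff : Prop :=
  forall x y, x <> y -> exists U V, is_open t U /\ is_open t V /\ U x /\ V y /\
    forall z, U z -> V z -> False.

Definition continuous_real (h : T -> R) : Prop :=
  forall x eps, eps > 0 -> exists U, is_open t U /\ U x /\
    forall y, U y -> Rabs (h y - h x) < eps.

Definition completely_regular : Prop :=
  forall (C : T -> Prop) (x : T), is_closed C -> ~ C x ->
    exists h : T -> R, continuous_real h /\ h x = 0 /\ forall y, C y -> h y = 1.

Definition locally_compact : Prop :=
  forall x, exists K, nbhd x K /\ compact K.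

End Topo.

(** continuity of f on the subset A (i.e. of the restriction of f to A
    with the subspace topology) *)
Definition continuous_on {T U : Type} (tT : Topology T) (tU : Topology U)
  (A : T -> Prop) (f : T -> U) : Prop :=
  forall x, A x -> forall V, is_open tU V -> V (f x) ->
    exists O, is_open tT O /\ O x /\ forall y, O y -> A y -> V (f y).

Definition continuous {T U : Type} (tT : Topology T) (tU : Topology U)
  (f : T -> U) : Prop := continuous_on tT tU (fun _ => True) f.

(** joint continuity of a two-variable map A x B -> C (product topology) *)
Definition continuous2 {A B C : Type} (tA : Topology A) (tB : Topology B)
  (tC : Topology C) (m : A -> B -> C) : Prop :=
  forall a b W, is_open tC W -> W (m a b) ->
    exists U V, is_open tA U /\ is_open tB V /\ U a /\ V b /\
      forall a' b', U a' -> V b' -> W (m a' b').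

(** A standing convention: all spaces are completely regular Hausdorff. *)
Definition crh {T : Type} (t : Topology T) : Prop :=
  hausdorff t /\ completely_regular t.

Definition is_group {G : Type} (mul : G -> G -> G) (e : G) (inv : G -> G) : Prop :=
  (forall a b c, mul (mul a b) c = mul a (mul b c)) /\
  (forall a, mul e a = a) /\ (forall a, mul a e = a) /\
  (forall a, mul (inv a) a = e) /\ (forall a, mul a (inv a) = e).

Definition topological_group {G : Type} (tG : Topology G)
  (mul : G -> G -> G) (e : G) (inv : G -> G) : Prop :=
  is_group mul e inv /\ continuous2 tG tG tG mul /\ continuous tG tG inv /\ crh tG.

Definition G_space {G X : Type} (tG : Topology G) (mul : G -> G -> G) (e : G)
  (tX : Topology X) (act : G -> X -> X) : Prop :=
  crh tX /\ continuous2 tG tX tX act /\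
  (forall x, act e x = x) /\ (forall g h x, act (mul g h) x = act g (act h x)).

Section Actions.
Context {G X : Type} (tG : Topology G) (act : G -> X -> X).

Definition saturation (S : X -> Prop) (x : X) : Prop :=
  exists g s, S s /\ x = act g s.

Definition transporter (U V : X -> Prop) (g : G) : Prop :=
  exists u, U u /\ V (act g u).

Definition thin (U V : X -> Prop) : Prop :=
  compact tG (closure tG (transporter U V)).

Context (tX : Topology X).

Definition small (U : X -> Prop) : Prop :=
  forall x, exists N, nbhd tX x N /\ thin N U.

Definition proper_action : Prop :=
  forall x, exists N, nbhd tX x N /\ small N.

End Actions.

(* Main.v *)
Require Import Defs.
From Stdlib Require Import Reals List Classical ClassicalEpsilon.

Lemma fin_inter {X : Type} (tX : Topology X) (x0 : X) {G : Type}
  (P : (G -> Prop) -> (X -> Prop) -> Prop)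
  (Pmono : forall W O O', (forall y, O' y -> O y) -> P W O -> P W O') :
  forall l : list (G -> Prop),
  (forall U, In U l -> exists O, is_open tX O /\ O x0 /\ P U O) ->
  exists O, is_open tX O /\ O x0 /\ forall U, In U l -> P U O.
Proof.
  induction l as [|W l IH]; intros H.
  - exists (fun _ => True). split; [apply open_full|]. split; [exact I|].
    intros U [].
  - destruct (IH (fun U HU => H U (or_intror HU))) as [O [HO [HOx HOP]]].
    destruct (H W (or_introl eq_refl)) as [O' [HO' [HO'x HO'P]]].
    exists (fun x => O x /\ O' x). split; [apply open_inter; auto|].
    split; [auto|]. intros U [HU|HU].
    + subst U. eapply Pmono; [|exact HO'P]. intros y [_ Hy]; exact Hy.
    + eapply Pmono; [|exact (HOP U HU)]. intros y [Hy _]; exact Hy.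
Qed.

Theorem theorem4p1
  (G X Y : Type) (tG : Topology G) (tX : Topology X) (tY : Topology Y)
  (mul : G -> G -> G) (e : G) (inv : G -> G)
  (HG : topological_group tG mul e inv) (HGlc : locally_compact tG)
  (actX : G -> X -> X) (HX : G_space tG mul e tX actX)
  (Hproper : proper_action tG actX tX)
  (actY : G -> Y -> Y) (HY : G_space tG mul e tY actY)
  (S : X -> Prop) (HSclosed : is_closed tX S) (HSsmall : small tG actX tX S)
  (f : X -> Y) (Hfcont : continuous_on tX tY S f)
  (Hfeq : forall s g, S s -> S (actX g s) -> f (actX g s) = actY g (f s)) :
  exists F : X -> Y,
    continuous_on tX tY (saturation actX S) F /\
    (forall s, S s -> F s = f s) /\
    (forall g x, saturation actX S x -> F (actX g x) = actY g (F x)) /\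
    (forall F' : X -> Y,
       continuous_on tX tY (saturation actX S) F' ->
       (forall s, S s -> F' s = f s) ->
       (forall g x, saturation actX S x -> F' (actX g x) = actY g (F' x)) ->
       forall x, saturation actX S x -> F' x = F x).
Proof.
  destruct HG as [[assoc [el [er [invl invr]]]] [mulc [invc _]]].
  destruct HX as [_ [actXc [actXe actXm]]].
  destruct HY as [_ [actYc [actYe actYm]]].
  assert (invinv : forall g, inv (inv g) = g).
  { intro g. rewrite <- (er (inv (inv g))), <- (invl g), <- assoc, invl, el.
    reflexivity. }
  assert (wd : forall g s g' s', S s -> S s' -> actX g s = actX g' s' ->
            actY g (f s) = actY g' (f s')).
  { intros g s g' s' Hs Hs' Heq.
    assert (E : actX (mul (inv g') g) s = s').
    { rewrite actXm, Heq, <- actXm, invl, actXe. reflexivity. }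
    assert (Hf := Hfeq s (mul (inv g') g) Hs (eq_ind_r S Hs' E)).
    rewrite E in Hf. rewrite Hf, <- actYm, <- assoc, invr, el. reflexivity. }
  assert (Hex : forall x, exists y, saturation actX S x ->
            exists g s, S s /\ x = actX g s /\ y = actY g (f s)).
  { intro x. destruct (classic (saturation actX S x)) as [[g [s [Hs Hx]]]|Hn].
    - exists (actY g (f s)). intros _. exists g, s. auto.
    - exists (f x). intro H; contradiction. }
  set (F := fun x => proj1_sig (constructive_indefinite_description _ (Hex x))).
  assert (Fspec : forall x g s, S s -> x = actX g s -> F x = actY g (f s)).
  { intros x g s Hs Hx. unfold F.
    destruct (constructive_indefinite_description _ (Hex x)) as [y Hy]. simpl.
    destruct (Hy (ex_intro _ g (ex_intro _ s (conj Hs Hx)))) as [g' [s' [Hs' [Hx' Hy']]]].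
    rewrite Hy'. apply wd; auto. congruence. }
  exists F. split; [|split; [|split]].
  -
    intros x0 [g0 [s0 [Hs0 Hx0]]] V HV HVx0.
    destruct (HSsmall x0) as [N [[ON [HON [HONx HONN]]] Hthin]].
    set (P := fun (W : G -> Prop) (O : X -> Prop) => forall h y, W h -> O y ->
                S (actX h y) -> V (actY (inv h) (f (actX h y)))).
    set (Fam := fun W => is_open tG W /\ exists O, is_open tX O /\ O x0 /\ P W O).
    destruct (Hthin Fam (fun U HU => proj1 HU)) as [l [Hl Hcov]].
    { intros k _. destruct (classic (S (actX k x0))) as [Hk|Hk].
      - assert (HF0 : F x0 = actY (inv k) (f (actX k x0))).
        { apply Fspec; auto. rewrite <- actXm, invl, actXe. reflexivity. }
        rewrite HF0 in HVx0.
        destruct (actYc _ _ _ HV HVx0) as [A [B [HA [HB [HAk [HBk HAB]]]]]].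
        destruct (invc k I A HA HAk) as [W1 [HW1 [HW1k HW1A]]].
        destruct (Hfcont _ Hk B HB HBk) as [C [HC [HCk HCB]]].
        destruct (actXc _ _ _ HC HCk) as [W2 [O [HW2 [HO [HW2k [HOx HWO]]]]]].
        exists (fun g => W1 g /\ W2 g). split; [|split; auto].
        split; [apply open_inter; auto|].
        exists O. split; [auto|split; [auto|]].
        intros h y [Hh1 Hh2] Hy HS. apply HAB.
        + apply HW1A; auto.
        + apply HCB; auto.
      - destruct (actXc _ _ _ HSclosed Hk) as [W [O [HW [HO [HWk [HOx HWO]]]]]].
        exists W. split; [|auto]. split; [auto|].
        exists O. split; [auto|split; [auto|]].
        intros h y Hh Hy HS. exfalso. exact (HWO h y Hh Hy HS). }
    destruct (fin_inter tX x0 P) with (l := l) as [O [HO [HOx HOP]]].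
    { intros W O O' HOO' HP h y Hh Hy. apply HP; auto. }
    { intros U HU. exact (proj2 (Hl U HU)). }
    exists (fun x => O x /\ ON x). split; [apply open_inter; auto|].
    split; [auto|]. intros y [HyO HyN] [g [s [Hs Hy]]].
    assert (Hhy : actX (inv g) y = s).
    { rewrite Hy, <- actXm, invl, actXe. reflexivity. }
    destruct (Hcov (inv g)) as [U [HUl HUg]].
    { intros U HU HUg. exists (inv g). split; auto.
      exists y. split; [auto|]. rewrite Hhy; auto. }
    assert (HV' := HOP U HUl (inv g) y HUg HyO (eq_ind_r S Hs Hhy)).
    rewrite Hhy, invinv in HV'. rewrite (Fspec y g s Hs Hy). exact HV'.
  - intros s Hs. rewrite (Fspec s e s Hs (eq_sym (actXe s))). apply actYe.
  - intros g x [h [s [Hs Hx]]].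
    rewrite (Fspec x h s Hs Hx), (Fspec (actX g x) (mul g h) s Hs).
    + apply actYm.
    + rewrite Hx, actXm. reflexivity.
  - intros F' _ HF'f HF'eq x [g [s [Hs Hx]]].
    rewrite (Fspec x g s Hs Hx), Hx, HF'eq, HF'f; auto.
    exists e, s. split; auto.
Qed.
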